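(* Let $\mathcal{H}$ be a real Hilbert space, let $A_i:\mathcal{H}\rightrightarrows\mathcal{H}$ be operators for $i=1,\ldots,r$, and let $\beta\in{]0,1[}$. Then \[ \operatorname{zer}\left(\sum_{i=1}^rA_i^{(\beta)}\right)=\beta J_{\frac{1}{r(1-\beta)}\sum_{i=1}^rA_i}(0). \] Therefore, $\operatorname{zer}\left(\sum_{i=1}^rA_i^{(\beta)}\right)\neq\emptyset$ if and only if $0\in\operatorname{ran}\left(\operatorname{Id}+\frac{1}{r(1-\beta)}\sum_{i=1}^rA_i\right)$.
   Context: The resolvent of an operator $T$ is $J_T:=(\operatorname{Id}+T)^{-1}$, i.e. $J_T(x)=\{y:x\in y+T(y)\}$ (a set). The $\beta$-strengthening of $A$ is $A^{(\beta)}(x):=\left(A+(1-\beta)\operatorname{Id}\right)\left(\frac{x}{\beta}\right)$. $\operatorname{zer}T=\{x:0\in T(x)\}$; $\operatorname{ran}$ denotes the range. *)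

(* Defs.v *)
From HB Require Import structures.
From mathcomp Require Import all_boot all_order all_algebra.
From mathcomp Require Import all_classical all_reals all_analysis.
Set Implicit Arguments. Unset Strict Implicit. Unset Printing Implicit Defensive.
Import Order.TTheory GRing.Theory Num.Theory.
Import numFieldNormedType.Exports.
Local Open Scope classical_set_scope.
Local Open Scope ring_scope.

Record inner_product (R : realType) (H : completeNormedModType R) := InnerProduct {
  inner : H -> H -> R ;
  inner_sym : forall x y, inner x y = inner y x ;
  inner_linear : forall a x y z, inner (a *: x + y) z = a * inner x z + inner y z ;
  inner_norm : forall x, inner x x = `|x| ^+ 2
}.

Definition opr (R : realType) (H : lmodType R) := H -> set H.

Section Ops.
Variables (R : realType) (H : lmodType R).

Definition op_id : opr H := fun x => [set x].
Definition op_add (A B : opr H) : opr H :=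
  fun x => [set z | exists a, exists b, A x a /\ B x b /\ z = a + b].
Definition op_scale (c : R) (A : opr H) : opr H :=
  fun x => [set z | exists u, A x u /\ z = c *: u].
Fixpoint op_sum (A : nat -> opr H) (n : nat) : opr H :=
  match n with
  | 0 => fun _ => [set 0]
  | n.+1 => op_add (op_sum A n) (A n)
  end.
Definition resolvent (T : opr H) : opr H :=
  fun x => [set y | op_add op_id T y x].
Definition strengthen (beta : R) (A : opr H) : opr H :=
  fun x => op_add A (op_scale (1 - beta) op_id) (beta^-1 *: x).
Definition zer (T : opr H) : set H := [set x | T x 0].
Definition ran (T : opr H) : set H := [set y | exists x, T x y].
End Ops.
Arguments op_id {R H}.

(* Main.v *)
Require Import Defs.
From HB Require Import structures.
From mathcomp Require Import all_boot all_order all_algebra.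
From mathcomp Require Import all_classical all_reals all_analysis.
Import Order.TTheory GRing.Theory Num.Theory.
Import numFieldNormedType.Exports.
Local Open Scope classical_set_scope.
Local Open Scope ring_scope.

Lemma sum_str (R : realType) (H : lmodType R) (A : nat -> opr H) (beta : R) n x z :
  op_sum (fun i => strengthen beta (A i)) n x z <->
  exists w, op_sum A n (beta^-1 *: x) w /\ z = w + (n%:R * (1-beta)) *: (beta^-1 *: x).
Proof.
elim: n z => [|n IH] z /=.
  split; first by move=> ->; exists 0; rewrite mul0r scale0r addr0.
  by move=> [w [-> ->]]; rewrite mul0r scale0r addr0.
split.
  move=> [a [b [/IH [w [Hw ->]] [[a' [b' [Ha' [[u [Hu ->]] ->]]]] ->]]]].
  exists (w + a'); split; first by exists w, a'.
  rewrite Hu (_ : n.+1%:R * (1-beta) = n%:R*(1-beta) + (1-beta)); last by rewrite -addn1 natrD mulrDl mul1r.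
  by rewrite scalerDl addrACA.
move=> [w [[a [b [Ha [Hb ->]]]] ->]].
exists (a + (n%:R * (1 - beta)) *: (beta^-1 *: x)), (b + (1 - beta) *: (beta^-1 *: x)).
split; first by apply/IH; exists a.
split; first by exists b, ((1 - beta) *: (beta^-1 *: x)); split=> //; split=> //; exists (beta^-1 *: x).
rewrite (_ : n.+1%:R * (1-beta) = n%:R*(1-beta) + (1-beta)); last by rewrite -addn1 natrD mulrDl mul1r.
by rewrite scalerDl addrACA.
Qed.

Theorem proposition4p5 (R : realType) (H : completeNormedModType R)
  (ip : inner_product H) (r : nat) (A : nat -> opr H) (beta : R) :
  (0 < r)%N -> 0 < beta < 1 ->
  let c := (r%:R * (1 - beta))^-1 in
  zer (op_sum (fun i => strengthen beta (A i)) r)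
    = [set beta *: y | y in resolvent (op_scale c (op_sum A r)) 0]
  /\ (zer (op_sum (fun i => strengthen beta (A i)) r) <> set0
      <-> ran (op_add op_id (op_scale c (op_sum A r))) 0).
Proof.
move=> r0 /andP[b0 b1] c.
have bn0 : beta != 0 by rewrite gt_eqF.
have kn0 : r%:R * (1 - beta) != 0 :> R.
  apply: mulf_neq0; first by rewrite pnatr_eq0 -lt0n.
  by rewrite subr_eq0 eq_sym lt_eqF.
have ck : c * (r%:R * (1 - beta)) = 1 by rewrite mulVf.
have E : zer (op_sum (fun i => strengthen beta (A i)) r)
    = [set beta *: y | y in resolvent (op_scale c (op_sum A r)) 0].
  apply/seteqP; split => x.
    rewrite /zer /= => /sum_str [w [Hw E0]].
    exists (beta^-1 *: x); last by rewrite scalerA mulfV // scale1r.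
    exists (beta^-1 *: x), (c *: w); split => //; split; first by exists w.
    have -> : w = - ((r%:R * (1 - beta)) *: (beta^-1 *: x)).
      by apply/eqP; rewrite -addr_eq0 -E0.
    by rewrite scalerN scalerA ck scale1r subrr.
  move=> [y [a [b [Ha [[w [Hw ->]] E0]]]] <-].
  rewrite /zer /=; apply/sum_str; exists w.
  rewrite scalerA mulVf // scale1r; split => //.
  rewrite /op_id /= in Ha; subst a.
  have -> : y = - (c *: w) by apply/eqP; rewrite -addr_eq0 -E0.
  by rewrite scalerN scalerA mulrC ck scale1r subrr.
split => //; rewrite E; split.
  move/eqP/set0P => [x [y [a [b [Ha [Hb E0]]]] _]].
  by exists y, a, b.
move=> [y Hy]; apply/eqP/set0P; exists (beta *: y); by exists y.
Qed.
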